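(* Let $f:\Gamma\to\Gamma$ be an irreducible, expanding graph map which is a homotopy equivalence. Then each stack $\mathcal{K}$ of $f$ has the form $\mathcal{K}=\{e,f(e),f^2(e),\dots,f^s(e)\}$ (as unoriented edges) for some edge $e$ and some $s\ge0$, where $e,f(e),\dots,f^{s-1}(e)$ are non-mixing and non-surplus and $f^s(e)$ is either mixing or surplus.
   Context: A graph $\Gamma$ is a finite 1-dimensional CW complex (multiple edges and loops allowed) with a chosen orientation on each edge; $\mathcal{E}\Gamma$ is the set of (positively oriented) edges, $\mathcal{E}^\pm\Gamma$ includes both orientations, $\bar e$ is the reverse of $e$, $\iota,\tau$ the endpoint maps. An edge path is a nonempty concatenation $u=e_1\cdots e_k$ with $\tau(e_i)=\iota(e_{i+1})$; $|u|=k$ (no cancellation); $u$ traverses $e$ if $e$ or $\bar e$ occurs in it. A graph map $f:\Gamma\to\Gamma$ consists of a vertex map $f_V$ and an edge path $f(e)$ for each $e\in\mathcal{E}^\pm\Gamma$ with $\iota(f(e))=f_V(\iota(e))$, $f(\bar e)=\overline{f(e)}$; powers are compositions; $f$ is regarded as a continuous map. The transition matrix $T(f)$ has $(i,j)$ entry the number of times $f(e_i)$ traverses $e_j$; $f$ is irreducible if $T(f)$ is an irreducible matrix and every vertex has valence at least $3$; $f$ is expanding if $|f^n(e)|\to\infty$ for every edge $e$. An edge $e\in\mathcal{E}\Gamma$ is mixing if $|f(e)|>1$. It is surplus if it is non-mixing and $f(e)\in\{f(u),\overline{f(u)}\}$ for some edge $u\in\mathcal{E}\Gamma$ with $u\notin\{e,\bar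 e\}$. For a non-mixing edge $e$, $f(e)$ is a single oriented edge, identified with its underlying unoriented edge. The stacks of $f$ are the equivalence classes of the equivalence relation on $\mathcal{E}\Gamma$ generated by $e\sim f(e)$ whenever $e$ is non-mixing and non-surplus. *)

(* Defs.v *)
From mathcomp Require Import all_boot.
Set Implicit Arguments. Unset Strict Implicit. Unset Printing Implicit Defensive.

(* An oriented edge is a pair (e,b),
   with b = true the positive orientation of e and b = false its reverse. *)
Section Graphs.
Variables (V E : finType) (iota tau : E -> V).

Definition oedge := (E * bool)%type.
Definition oiota (a : oedge) : V := if a.2 then iota a.1 else tau a.1.
Definition otau (a : oedge) : V := if a.2 then tau a.1 else iota a.1.
Definition flip (a : oedge) : oedge := (a.1, ~~ a.2).
Definition rev_path (p : seq oedge) : seq oedge := rev (map flip p).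

Definition walk (u : V) (p : seq oedge) (v : V) : bool :=
  if p is a :: p' then
    [&& oiota a == u, path (fun x y => otau x == oiota y) a p' & otau (last a p') == v]
  else u == v.

Definition edge_path (u : V) (p : seq oedge) (v : V) : bool := (p != [::]) && walk u p v.

Definition valence (v : V) : nat := #|[pred e | iota e == v]| + #|[pred e | tau e == v]|.

(* maps given by a vertex map and an image path for each positive edge;
   the image of a reversed edge is the reversed path *)
Definition apply_oe (mE : E -> seq oedge) (a : oedge) : seq oedge :=
  if a.2 then mE a.1 else rev_path (mE a.1).
Definition apply_path (mE : E -> seq oedge) (p : seq oedge) : seq oedge :=
  flatten (map (apply_oe mE) p).

Definition is_graph_map (mV : V -> V) (mE : E -> seq oedge) : Prop :=
  forall e, edge_path (mV (iota e)) (mE e) (mV (tau e)).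

Definition is_cmap (mV : V -> V) (mE : E -> seq oedge) : Prop :=
  forall e, walk (mV (iota e)) (mE e) (mV (tau e)).

Inductive htp : seq oedge -> seq oedge -> Prop :=
| htp_refl p : htp p p
| htp_sym p q : htp p q -> htp q p
| htp_trans p q r : htp p q -> htp q r -> htp p r
| htp_cancel p1 a p2 : htp (p1 ++ a :: flip a :: p2) (p1 ++ p2).

(* (free) homotopy of cellular maps h ~ k: vertex tracks alpha v from h v to
   k v such that h(e) alpha(tau e) ~ alpha(iota e) k(e) rel endpoints *)
Definition maps_homotopic (hV kV : V -> V) (hE kE : E -> seq oedge) : Prop :=
  exists alpha : V -> seq oedge,
    (forall v, walk (hV v) (alpha v) (kV v)) /\
    (forall e, htp (hE e ++ alpha (tau e)) (alpha (iota e) ++ kE e)).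

Definition id_edges (e : E) : seq oedge := [:: (e, true)].

Definition homotopy_equivalence (fV : V -> V) (fE : E -> seq oedge) : Prop :=
  exists (gV : V -> V) (gE : E -> seq oedge),
    is_cmap gV gE /\
    maps_homotopic (gV \o fV) id (apply_path gE \o fE) id_edges /\
    maps_homotopic (fV \o gV) id (apply_path fE \o gE) id_edges.

Definition transition (fE : E -> seq oedge) (i j : E) : nat :=
  count (fun a : oedge => a.1 == j) (fE i).

Fixpoint tpow (T : E -> E -> nat) (n : nat) (i j : E) : nat :=
  match n with
  | 0 => (i == j : nat)
  | n'.+1 => \sum_(k : E) tpow T n' i k * T k j
  end.

Definition irreducible_matrix (T : E -> E -> nat) : Prop :=
  forall i j, exists n, 0 < n /\ 0 < tpow T n i j.

Definition irreducible_map (fE : E -> seq oedge) : Prop :=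
  irreducible_matrix (transition fE) /\ forall v, 3 <= valence v.

Definition fpow (fE : E -> seq oedge) (n : nat) (e : E) : seq oedge :=
  iter n (apply_path fE) [:: (e, true)].

Definition expanding (fE : E -> seq oedge) : Prop :=
  forall e M, exists N, forall n, N <= n -> M <= size (fpow fE n e).

Definition mixing (fE : E -> seq oedge) (e : E) : bool := 1 < size (fE e).

Definition surplus (fE : E -> seq oedge) (e : E) : bool :=
  ~~ mixing fE e &&
  [exists u : E, (u != e) && ((fE e == fE u) || (fE e == rev_path (fE u)))].

(* underlying unoriented edge of a (single-edge) path *)
Definition und (e0 : E) (p : seq oedge) : E := (head (e0, true) p).1.

Definition nmns (fE : E -> seq oedge) (e : E) : bool :=
  ~~ mixing fE e && ~~ surplus fE e.

Definition stack_rel (fE : E -> seq oedge) : rel E :=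
  fun e e' => (nmns fE e && (und e (fE e) == e')) || (nmns fE e' && (und e' (fE e') == e)).

Definition stack (fE : E -> seq oedge) (e : E) : {set E} :=
  [set e' | connect (stack_rel fE) e e'].

End Graphs.

(* Main.v *)
Require Import Defs.
From mathcomp Require Import all_boot.
Set Implicit Arguments.

Lemma fE_single (V E : finType) (iota tau : E -> V) fV (fE : E -> seq (oedge E)) :
  is_graph_map iota tau fV fE -> forall x, ~~ mixing fE x -> exists a, fE x = [:: a].
Proof.
move=> H x; rewrite /mixing; have := H x; rewrite /edge_path.
by case: (fE x) => [|a [|b l]] //= _ _; exists a.
Qed.

Lemma nm_inj (V E : finType) (iota tau : E -> V) fV (fE : E -> seq (oedge E)) :
  is_graph_map iota tau fV fE -> forall x y, nmns fE x -> nmns fE y ->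
  und x (fE x) = und y (fE y) -> x = y.
Proof.
move=> Hg x y /andP [Hmx Hsx] /andP [Hmy _] Hxy.
have [a Ha] := fE_single Hg _ Hmx; have [c Hc] := fE_single Hg _ Hmy.
apply/eqP; apply: contraNT Hsx => Hneq.
rewrite /surplus Hmx /=; apply/existsP; exists y.
rewrite eq_sym Hneq /= Ha Hc.
move: Hxy; rewrite /und Ha Hc /=.
case: a {Ha} => a1 a2; case: c {Hc} => c1 c2 /= ->.
by case: a2; case: c2; rewrite /rev_path /flip /= ?eqxx ?orbT.
Qed.

Theorem lemma3p1 (V E : finType) (iota tau : E -> V)
    (fV : V -> V) (fE : E -> seq (oedge E)) :
  is_graph_map iota tau fV fE ->
  irreducible_map iota tau fE ->
  expanding fE ->
  homotopy_equivalence iota tau fV fE ->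
  forall e0 : E,
    exists (e : E) (s : nat),
      (forall i, i <= s -> size (fpow fE i e) = 1) /\
      (forall i, i < s -> nmns fE (und e (fpow fE i e))) /\
      (mixing fE (und e (fpow fE s e)) || surplus fE (und e (fpow fE s e))) /\
      stack fE e0 = [set und e (fpow fE (nat_of_ord i) e) | i : 'I_s.+1].
Proof.
move=> Hg _ Hexp _ e0.
pose g := fun x => und x (fE x).
have chain : forall e n, (forall i, i < n -> nmns fE (iter i g e)) ->
    exists b, fpow fE n e = [:: (iter n g e, b)].
  move=> e; elim=> [|n IH] Hn; first by exists true.
  have [b Hb] : exists b, fpow fE n e = [:: (iter n g e, b)].
    by apply: IH => i Hi; apply: Hn; apply: ltnW.
  have Hnm := Hn n (ltnSn n).
  have [a Ha] := fE_single Hg _ (andP Hnm).1.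
  rewrite /fpow iterS -/(fpow fE n e) Hb /apply_path /= /apply_oe /= Ha cats0.
  have -> : g (iter n g e) = a.1 by rewrite [g _]/g Ha.
  rewrite /rev_path /=.
  by case: b {Hb}; case: a {Ha} => a1 a2; [exists a2 | exists (~~ a2)].
have Hex : forall x, exists n, (fun n => ~~ nmns fE (iter n g x)) n.
  move=> x; have [N HN] := Hexp x 2; have := HN N (leqnn N).
  case: (boolP [forall i : 'I_N, nmns fE (iter i g x)]) => [/forallP H|].
    by have [b ->] := chain x N (fun i Hi => H (Ordinal Hi)).
  by move=> /forallPn [i Hi] _; exists i.
pose h x := ex_minn (Hex x).
have hP : forall x, ~~ nmns fE (iter (h x) g x) /\
    forall n, ~~ nmns fE (iter n g x) -> h x <= n.
  by move=> x; rewrite /h; case: ex_minnP => m Pm Hm; split.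
have hpre : forall x y, nmns fE y -> g y = x -> h y = (h x).+1.
  move=> x y Hy Hgy; have [Py my] := hP y; have [Px mx] := hP x.
  apply/eqP; rewrite eqn_leq; apply/andP; split.
    by apply: my; rewrite iterSr Hgy.
  move: Py; case: (h y) => [|k]; first by rewrite Hy.
  rewrite -/(iter k.+1 g y) iterSr Hgy => Pk; exact: mx.
have symr : connect_sym (stack_rel fE).
  apply: sym_connect_sym => x y; by rewrite /stack_rel orbC.
have e0in : e0 \in stack fE e0 by rewrite inE connect0.
case: (arg_maxnP h e0in) => e Hein Hmax.
have Hein0 : connect (stack_rel fE) e0 e.
  by have H : e \in stack fE e0 := Hein; rewrite inE in H.
have Hein1 : e \in stack fE e0 by rewrite inE.
set s := h e.
have [Ps ms] := hP e.
have nmi : forall i, i < s -> nmns fE (iter i g e).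
  by move=> i Hi; apply: contraTT Hi => /ms; rewrite -leqNgt.
have fpe : forall i, i <= s -> fpow fE i e = [:: (iter i g e, true)] \/
                                fpow fE i e = [:: (iter i g e, false)].
  move=> i Hi; have [b ->] := chain e i (fun j Hj => nmi j (leq_trans Hj Hi)).
  by case: b; [left|right].
have undi : forall i, i <= s -> und e (fpow fE i e) = iter i g e.
  by move=> i /fpe [->|->].
exists e, s; split; first by move=> i /fpe [->|->].
split; first by move=> i Hi; rewrite undi; [exact: nmi | exact: ltnW].
split; first by rewrite undi //; move: Ps; rewrite /nmns negb_and !negbK.
have conn_e : forall i, i <= s -> connect (stack_rel fE) e (iter i g e).
  elim=> [|i IH] Hi; first exact: connect0.
  apply: connect_trans (IH (ltnW Hi)) _; apply: connect1.
  by rewrite /stack_rel nmi // iterS eqxx.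
pose T := [set iter (nat_of_ord i) g e | i : 'I_s.+1].
have inT : forall y, reflect (exists2 i, i <= s & y = iter i g e) (y \in T).
  move=> y; apply: (iffP imsetP) => [[i _ ->]|[i Hi ->]].
    by exists i => //; rewrite -ltnS.
  by exists (Ordinal (Hi : i < s.+1)).
have Tcl : closed (stack_rel fE) T.
  have one : forall x y, stack_rel fE x y -> x \in T -> y \in T.
    move=> x y Hxy /inT [i Hi Ex]; apply/inT.
    case/orP: Hxy => /andP [Hnm /eqP Hu].
      case: (ltngtP i s) => [lt|gt|eq].
      - by exists i.+1 => //; rewrite -Hu Ex iterS.
      - by move: Hi; rewrite leqNgt gt.
      - by rewrite eq in Ex; move: Ps; rewrite -Ex Hnm.
    case: i Hi Ex => [|i] Hi Ex.
      have Hy : h y = s.+1 by apply: hpre Hnm _; rewrite /= in Ex; rewrite -Ex; exact: Hu.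
      suff Hyin : y \in stack fE e0.
        by have := Hmax y Hyin; rewrite /= Hy -/s ltnn.
      rewrite inE; apply: connect_trans Hein0 _.
      by apply: connect1; apply/orP; right; rewrite Hnm; apply/eqP; rewrite Hu Ex.
    exists i; first exact: ltnW.
    apply: (nm_inj Hg) => //; first by apply: nmi.
    by rewrite Hu Ex.
  move=> x y Hxy; apply/idP/idP; first exact: one.
  by apply: one; rewrite /stack_rel orbC.
apply/setP => y; rewrite inE.
have -> : connect (stack_rel fE) e0 y = connect (stack_rel fE) e y.
  apply/idP/idP => H.
    by apply: connect_trans _ H; rewrite symr.
  exact: connect_trans Hein0 H.
apply/idP/imsetP => [H|[i _ ->]].
  have : y \in T.
    rewrite -(closed_connect Tcl H); apply/inT; by exists 0.
  case/inT => i Hi ->; exists (Ordinal (Hi : i < s.+1)) => //.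
  by rewrite undi.
have Hi : i <= s by rewrite -ltnS; exact: ltn_ord.
by rewrite undi //; apply: conn_e.
Qed.
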